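(* Let $G$ be a finite abelian group, $T \subsetneq G$ a non-empty subset, and fix $x \in G$ with $T + x \ne T$. Put $T^{\uparrow} = T + x$, $C^{\uparrow} = T^{\uparrow}\setminus T$, $C^{\downarrow} = T \setminus T^{\uparrow}$ and $A = T \cup T^{\uparrow}$. For integers $1 \le i \le d$ let $C_{i,d} = C^{\downarrow}\times\dots\times C^{\downarrow}\times C^{\uparrow}\times C^{\downarrow}\times\dots\times C^{\downarrow} \subset A^d$ (with $d$ factors, $C^{\uparrow}$ in the $i$-th factor), and let $C_{0,d} = (C^{\downarrow})^d$. Then for any integers $d \ge 1$ and $0 \le i \le d$, the set $A^d \setminus C_{i,d} \subset G^d$ is $T$-tilable.
   Context: A copy of $T$ in $G^d$ is a translate $\mathsf{T}_j + y$ ($y\in G^d$, $1\le j\le d$), where $\mathsf{T}_j\subset G^d$ is the set of points with $j$-th coordinate in $T$ and all other coordinates $0$. A subset of $G^d$ is $T$-tilable if it is a disjoint union of copies of $T$. *)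

(* Defs.v *)
From mathcomp Require Import all_boot all_order all_algebra.
Set Implicit Arguments. Unset Strict Implicit. Unset Printing Implicit Defensive.
Import GRing.Theory.
Local Open Scope ring_scope.

(* G^d is modelled as {ffun 'I_d -> G}; coordinates are indexed 0..d-1. *)

Definition translate (G : finZmodType) (T : {set G}) (x : G) : {set G} :=
  [set t + x | t in T].

Definition evec (G : finZmodType) (d : nat) (j : 'I_d) (t : G) : {ffun 'I_d -> G} :=
  [ffun k => if k == j then t else 0].

Definition copyT (G : finZmodType) (d : nat) (T : {set G}) (j : 'I_d)
  (y : {ffun 'I_d -> G}) : {set {ffun 'I_d -> G}} :=
  [set [ffun k => y k + evec j t k] | t in T].

Definition is_copy (G : finZmodType) (d : nat) (T : {set G})
  (B : {set {ffun 'I_d -> G}}) : Prop :=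
  exists (j : 'I_d) (y : {ffun 'I_d -> G}), B = copyT T j y.

Definition tilable (G : finZmodType) (d : nat) (T : {set G})
  (S : {set {ffun 'I_d -> G}}) : Prop :=
  exists P : {set {set {ffun 'I_d -> G}}},
    (forall B, B \in P -> is_copy T B) /\ trivIset P /\ cover P = S.

Definition powset (G : finZmodType) (d : nat) (A : {set G}) : {set {ffun 'I_d -> G}} :=
  [set v : {ffun 'I_d -> G} | [forall k, v k \in A]].

(* C_{i,d}: Cup in the i-th factor (1-based, i.e. coordinate k with k.+1 = i),
   Cdown elsewhere; for i = 0 this is Cdown^d. *)
Definition Cid (G : finZmodType) (d i : nat) (Cup Cdown : {set G})
  : {set {ffun 'I_d -> G}} :=
  [set v : {ffun 'I_d -> G} | [forall k : 'I_d, v k \in (if k.+1 == i then Cup else Cdown)]].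

(* Main.v *)
Require Import Defs.
From mathcomp Require Import all_boot all_order all_algebra.
Set Implicit Arguments. Unset Strict Implicit. Unset Printing Implicit Defensive.
Import GRing.Theory.
Local Open Scope ring_scope.

Lemma mem_translate (G : finZmodType) (T : {set G}) x w :
  (w \in translate T x) = (w - x \in T).
Proof.
apply/imsetP/idP => [[t tT ->]|h]; first by rewrite GRing.addrK.
by exists (w - x) => //; rewrite GRing.subrK.
Qed.

Lemma mem_copyT (G : finZmodType) d (T : {set G}) (j : 'I_d) y w :
  (w \in copyT T j y) = (w j - y j \in T) && [forall k, (k != j) ==> (w k == y k)].
Proof.
apply/imsetP/andP => [[t tT ->]|[h1 /forallP h2]].
  rewrite /evec !ffunE eqxx (GRing.addrC (y j) t) GRing.addrK; split => //.
  apply/forallP => k; apply/implyP => kj; by rewrite !ffunE (negbTE kj) GRing.addr0.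
exists (w j - y j) => //; apply/ffunP => k; rewrite /evec !ffunE.
case: eqP => [->|/eqP kj]; first by rewrite GRing.addrC GRing.subrK.
by rewrite GRing.addr0; apply/eqP; exact: (implyP (h2 k) kj).
Qed.

Lemma main_tile (G : finZmodType) (T : {set G}) d (A : {set G})
  (D E : 'I_d -> {set G}) (s : 'I_d -> G)
  (hE : forall k, E k = translate T (s k))
  (hDE : forall k, D k :&: E k = set0) (hU : forall k, D k :|: E k = A) :
  tilable T (powset d A :\: [set v : {ffun 'I_d -> G} | [forall k, v k \in D k]]).
Proof.
have EnD k a : a \in E k -> a \notin D k.
  move=> aE; apply/negP => aD.
  have : a \in D k :&: E k by rewrite inE aD aE.
  by rewrite hDE inE.
have EA k a : a \in E k -> a \in A by move=> aE; rewrite -(hU k) inE aE orbT.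
have DA k a : a \in D k -> a \in A by move=> aD; rewrite -(hU k) inE aD.
have nDE k a : a \in A -> a \notin D k -> a \in E k.
  by rewrite -(hU k) inE => /orP[->|].
pose good (p : 'I_d * {ffun 'I_d -> G}) :=
  [&& p.2 p.1 == s p.1, [forall k : 'I_d, (k != p.1) ==> (p.2 k \in A)]
    & [forall k : 'I_d, (k < p.1)%N ==> (p.2 k \in D k)]].
have char j y w : good (j, y) -> w \in copyT T j y ->
   [/\ w j \notin D j, forall k : 'I_d, (k < j)%N -> w k \in D k & forall k, w k \in A].
  case/and3P => /eqP yj /forallP yA /forallP yD.
  rewrite mem_copyT => /andP[wT /forallP wy].
  have wE : w j \in E j by rewrite hE mem_translate -yj.
  have wk k : k != j -> w k = y k by move=> kj; apply/eqP; exact: (implyP (wy k) kj).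
  split; first exact: EnD.
    move=> k kj; rewrite wk; first exact: (implyP (yD k) kj).
    by apply/eqP => e; move: kj; rewrite e ltnn.
  move=> k; case: (eqVneq k j) => [->|kj]; first exact: (EA j).
  by rewrite wk //; exact: (implyP (yA k) kj).
have uniq (j1 j2 : 'I_d) (w : {ffun 'I_d -> G}) :
   w j1 \notin D j1 -> (forall k : 'I_d, (k < j1)%N -> w k \in D k) ->
   w j2 \notin D j2 -> (forall k : 'I_d, (k < j2)%N -> w k \in D k) -> j1 = j2.
  move=> n1 h1 n2 h2; case: (ltngtP j1 j2) => h.
  - by rewrite h2 in n1.
  - by rewrite h1 in n2.
  - exact: val_inj.
have ydet j y w : good (j, y) -> w \in copyT T j y ->
   y = [ffun k => if k == j then s j else w k].
  case/and3P => /eqP yj _ _; rewrite mem_copyT => /andP[_ /forallP wy].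
  apply/ffunP => k; rewrite ffunE; case: (eqVneq k j) => [->//|kj].
  by apply/esym/eqP; exact: (implyP (wy k) kj).
pose P := [set copyT T p.1 p.2 | p in [set p | good p]].
exists P; split; last split.
- by move=> B /imsetP[p _ ->]; exists p.1, p.2.
- apply/trivIsetP => B1 B2 /imsetP[[j1 y1] g1 ->] /imsetP[[j2 y2] g2 ->] neq.
  rewrite -setI_eq0; apply/eqP/setP => w; rewrite !inE.
  apply/negbTE/negP => /andP[w1 w2]; move/negP: neq; apply.
  rewrite inE in g1; rewrite inE in g2.
  have [a1 b1 _] := char _ _ _ g1 w1; have [a2 b2 _] := char _ _ _ g2 w2.
  have ej := uniq _ _ _ a1 b1 a2 b2; subst j2.
  by rewrite (ydet _ _ _ g1 w1) (ydet _ _ _ g2 w2).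
- apply/setP => w; rewrite /cover; apply/bigcupP/idP.
  + case=> B /imsetP[[j y] g ->] wB; rewrite inE in g.
    have [a b c] := char _ _ _ g wB.
    rewrite !inE; apply/andP; split.
      by apply/negP => /forallP h; rewrite h in a.
    by apply/forallP.
  + rewrite !inE => /andP[nC /forallP wA].
    move/forallPn: nC => [k0 hk0].
    case: (@arg_minnP _ k0 (fun k => w k \notin D k) (fun k : 'I_d => nat_of_ord k) hk0)
       => j hj jmin.
    pose y := [ffun k => if k == j then s j else w k].
    exists (copyT T j y).
      apply/imsetP; exists (j, y) => //; rewrite inE /good /=.
      apply/and3P; split.
      * by rewrite /y ffunE eqxx.
      * apply/forallP => k; apply/implyP => kj; by rewrite /y ffunE (negbTE kj).
      * apply/forallP => k; apply/implyP => kj.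
        have kj' : k != j by apply/eqP => e; move: kj; rewrite e ltnn.
        rewrite /y ffunE (negbTE kj').
        apply/negPn/negP => nk; have := jmin k nk; by rewrite leqNgt kj.
    rewrite mem_copyT /y ffunE eqxx; apply/andP; split.
      by rewrite -mem_translate -hE; apply: nDE.
    by apply/forallP => k; apply/implyP => kj; rewrite ffunE (negbTE kj).
Qed.

Theorem proposition10 (G : finZmodType) (T : {set G}) (x : G)
  (hT0 : T != set0) (hTG : T \proper [set: G])
  (hx : translate T x != T) (d i : nat) (hd : (1 <= d)%N) (hi : (i <= d)%N) :
  let Tup := translate T x in
  let Cup := Tup :\: T in
  let Cdown := T :\: Tup in
  let A := T :|: Tup in
  tilable T (powset d A :\: Cid d i Cup Cdown).
Proof.
move=> Tup Cup Cdown A.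
apply: (@main_tile G T d A (fun k : 'I_d => if (k.+1 == i)%N then Cup else Cdown)
   (fun k : 'I_d => if (k.+1 == i)%N then T else Tup)
   (fun k : 'I_d => if (k.+1 == i)%N then 0 else x)).
- move=> k; case: ifP => _ //.
  by apply/setP => w; rewrite mem_translate GRing.subr0.
- move=> k; case: ifP => _; apply/setP => w; rewrite !inE;
    by case: (w \in T); case: (w \in Tup).
- move=> k; case: ifP => _; apply/setP => w; rewrite !inE;
    by case: (w \in T); case: (w \in Tup).
Qed.
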